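(* Let $n\ge 1$ and let $\mathcal{OCT}_n$ be the semigroup of all order-preserving full contractions of $[n]=\{1,\dots,n\}$. Let $\textnormal{Reg}(\mathcal{OCT}_n)$ be the set of regular elements of $\mathcal{OCT}_n$. Then $$|\textnormal{Reg}(\mathcal{OCT}_n)|=\frac{n(n-1)(2n-1)+6n}{6}.$$
   Context: $\mathcal{T}_n$ is the semigroup (under composition) of all maps $[n]\to[n]$. A map $\alpha\in\mathcal{T}_n$ is a contraction if $|x\alpha-y\alpha|\le |x-y|$ for all $x,y\in[n]$, and order-preserving if $x\le y$ implies $x\alpha\le y\alpha$. $\mathcal{OCT}_n$ is the set of order-preserving contractions, a subsemigroup of $\mathcal{T}_n$. An element $\alpha\in\mathcal{OCT}_n$ is regular if there is $\beta\in\mathcal{OCT}_n$ with $\alpha\beta\alpha=\alpha$. *)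

(* Defs.v *)
From mathcomp Require Import all_boot all_order.
Set Implicit Arguments. Unset Strict Implicit. Unset Printing Implicit Defensive.

(* [n] = {1,..,n} is modelled by 'I_n = {0,..,n-1} (a shift, which does not
   affect order or distances).  Maps [n] -> [n] are finite functions. *)

Definition distn (x y : nat) : nat := (x - y) + (y - x).

Definition is_contraction n (a : {ffun 'I_n -> 'I_n}) : bool :=
  [forall x : 'I_n, forall y : 'I_n, distn (a x) (a y) <= distn x y].

Definition is_order_preserving n (a : {ffun 'I_n -> 'I_n}) : bool :=
  [forall x : 'I_n, forall y : 'I_n, (x <= y) ==> (a x <= a y)].

Definition in_OCT n (a : {ffun 'I_n -> 'I_n}) : bool :=
  is_order_preserving a && is_contraction a.

(* product in T_n with maps written on the right: x(ab) = (xa)b *)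
Definition tmul n (a b : {ffun 'I_n -> 'I_n}) : {ffun 'I_n -> 'I_n} :=
  [ffun x => b (a x)].

Definition Reg_OCT n : {set {ffun 'I_n -> 'I_n}} :=
  [set a | in_OCT a && [exists b, in_OCT b && (tmul (tmul a b) a == a)]].

(* Main.v *)
Require Import Defs.
From mathcomp Require Import all_boot all_order.
From mathcomp Require Import zify.

Lemma core (m : nat) (A B : nat -> nat)
  (HA : forall x y, x <= y <= m -> A x <= A y <= A x + (y - x))
  (HB : forall x y, x <= y <= m -> B x <= B y <= B x + (y - x))
  (HAm : forall x, A x <= m) (HBm : forall x, B x <= m)
  (R : forall x, x <= m -> A (B (A x)) = A x) :
  exists a k s, [/\ a + k <= m, s + k <= m &
     forall x, x <= m -> A x = a + minn k (x - s)].
Proof.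
set a := A 0.
have a0m : a <= A m by have := HA 0 m; rewrite /a; lia.
set k := A m - a.
have Am : A m = a + k by rewrite /k; lia.
have akm : a + k <= m by rewrite -Am.
have img : forall y, a <= y <= a + k -> exists x, x <= m /\ A x = y.
  move=> y hy.
  suff: forall j, j <= m -> y <= A j -> exists x, x <= m /\ A x = y.
    by move/(_ m (leqnn _)); apply; lia.
  elim=> [|j IH] hj hyj.
    by exists 0; split => //; rewrite /a in hy; lia.
  case: (leqP y (A j)) => h; first by case: (IH _ h) => [|x [? ?]]; [lia|exists x; split; lia].
  exists j.+1; split => //; have := HA j j.+1; lia.
have AB : forall y, a <= y <= a + k -> A (B y) = y.
  by move=> y /img [x [hx <-]]; rewrite R.
set s := B a.
have Bj : forall j, j <= k -> B (a + j) = s + j.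
  elim=> [|j IH] hj. by rewrite /s !addn0.
  have e := IH (ltnW hj).
  have := HB (a + j) (a + j.+1).
  case: (eqVneq (B (a + j.+1)) (B (a + j))) => [E|ne].
    have := AB (a + j); have := AB (a + j.+1); rewrite E; lia.
  move: ne; rewrite e; move/eqP; lia.
have Asj : forall j, j <= k -> A (s + j) = a + j.
  by move=> j hj; rewrite -Bj // AB //; lia.
have skm : s + k <= m by rewrite -Bj //; apply: HBm.
exists a, k, s; split => // x hx.
case: (leqP x s) => h1.
  have ea : A 0 = a by []. have := HA 0 x; have := HA x s; have := Asj 0 (leq0n _); rewrite !addn0; clearbody s k a; lia.
case: (leqP x (s + k)) => h2.
  have := Asj (x - s); have -> : s + (x - s) = x by lia. lia.
have := HA (s + k) x; have := HA x m; have := Asj k; lia.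
Qed.

Set Implicit Arguments. Unset Strict Implicit.

Lemma lemA a k s x y : x <= y -> a + minn k (x - s) <= a + minn k (y - s) <= a + minn k (x - s) + (y - x).
Proof. move=> h; rewrite /minn; case: ifP; case: ifP; lia. Qed.
Lemma distn_mono (u v x y : nat) : (x <= y -> u <= v <= u + (y - x)) -> (y <= x -> v <= u <= v + (x - y)) -> (u - v) + (v - u) <= (x - y) + (y - x).
Proof. move=> H1 H2; case: (leqP x y) => h; [have := H1 h | have := H2 (ltnW h)]; lia. Qed.

Definition gfun m (a k s : nat) : {ffun 'I_m.+1 -> 'I_m.+1} :=
  [ffun x : 'I_m.+1 => inord (a + minn k (x - s))].

Lemma gfunE m a k s x : a + k <= m -> nat_of_ord (gfun m a k s x) = a + minn k (x - s).
Proof. move=> h; rewrite ffunE inordK // ltnS; apply: leq_trans h; by rewrite leq_add2l geq_minl. Qed.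

Lemma gfun_OCT m a k s : a + k <= m -> in_OCT (gfun m a k s).
Proof.
move=> h; apply/andP; split; apply/forallP=> x; apply/forallP=> y.
  rewrite !gfunE //; apply/implyP=> hxy; by case/andP: (lemA a k s hxy).
rewrite /distn !gfunE //; apply: distn_mono; exact: lemA.
Qed.

Lemma gfun_reg m a k s : a + k <= m -> s + k <= m ->
  tmul (tmul (gfun m a k s) (gfun m s k a)) (gfun m a k s) = gfun m a k s.
Proof.
move=> h1 h2; apply/ffunP=> x.
have E : forall n (f g : {ffun 'I_n -> 'I_n}) y, tmul f g y = g (f y) by move=> *; rewrite ffunE.
rewrite !E; apply: val_inj => /=.
rewrite !gfunE //.
move: (nat_of_ord x) => y; rewrite /minn; case: ifP; case: ifP; try case: ifP; lia.
Qed.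

Lemma OCT_nat m (al : {ffun 'I_m.+1 -> 'I_m.+1}) : in_OCT al ->
  forall x y, x <= y <= m ->
    nat_of_ord (al (inord x)) <= nat_of_ord (al (inord y)) <= nat_of_ord (al (inord x)) + (y - x).
Proof.
case/andP=> /forallP op /forallP ct x y hxy.
have hx : x < m.+1 by lia.
have hy : y < m.+1 by lia.
have := op (inord x); move/forallP/(_ (inord y)); rewrite !inordK // => /implyP/(_ ltac:(lia)).
have := ct (inord x); move/forallP/(_ (inord y)); rewrite /distn !inordK //.
move: (nat_of_ord (al (inord x))) (nat_of_ord (al (inord y))) => u v; lia.
Qed.


Lemma tmulE n (f g : {ffun 'I_n -> 'I_n}) y : tmul f g y = g (f y).
Proof. by rewrite ffunE. Qed.

Lemma reg_form m (al : {ffun 'I_m.+1 -> 'I_m.+1}) : al \in Reg_OCT m.+1 ->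
  exists a k s, [/\ a + k <= m, s + k <= m, (k == 0) ==> (s == 0) & al = gfun m a k s].
Proof.
rewrite inE => /andP [hal /existsP [be /andP [hbe /eqP E]]].
pose A := fun x => nat_of_ord (al (inord x)).
pose B := fun x => nat_of_ord (be (inord x)).
have HAm : forall x, A x <= m by move=> x; rewrite -ltnS ltn_ord.
have HBm : forall x, B x <= m by move=> x; rewrite -ltnS ltn_ord.
have R : forall x, x <= m -> A (B (A x)) = A x.
  move=> x _; rewrite /A /B !inord_val.
  by have := congr1 (fun f : {ffun 'I_m.+1 -> 'I_m.+1} => nat_of_ord (f (inord x))) E; rewrite /= !tmulE.
have [a [k [s [h1 h2 H]]]] := @core m A B (OCT_nat hal) (OCT_nat hbe) HAm HBm R.
exists a, k, (if k == 0 then 0 else s); split => //.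
- by case: eqP => // ->.
- by case: eqP.
apply/ffunP => x; apply: val_inj => /=; rewrite gfunE //.
have := H x (ltnSE (ltn_ord x)); rewrite /A inord_val => ->.
by case: eqP => // ->; rewrite !minnE.
Qed.

Definition Pset m : {set 'I_m.+1 * 'I_m.+1 * 'I_m.+1} :=
  [set p : 'I_m.+1 * 'I_m.+1 * 'I_m.+1 | (p.1.1 + p.1.2 <= m) && (p.2 + p.1.2 <= m) && ((p.1.2 == 0 :> nat) ==> (p.2 == 0 :> nat))].

Definition gp m (p : 'I_m.+1 * 'I_m.+1 * 'I_m.+1) := gfun m p.1.1 p.1.2 p.2.

Lemma Reg_eq m : Reg_OCT m.+1 = [set gp p | p in Pset m].
Proof.
apply/setP => al; apply/idP/imsetP.
  move/reg_form => [a [k [s [h1 h2 h3 ->]]]].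
  have ha : a < m.+1 by lia.
  have hk : k < m.+1 by lia.
  have hs : s < m.+1 by lia.
  exists (inord a, inord k, inord s); last by rewrite /gp /= !inordK.
  by rewrite inE /= !inordK // h1 h2 h3.
case=> p; rewrite inE => /andP [/andP [h1 h2] _] ->.
rewrite inE gfun_OCT //=; apply/existsP; exists (gfun m p.2 p.1.2 p.1.1).
by rewrite gfun_OCT //= gfun_reg.
Qed.

Lemma gp_inj m : {in Pset m &, injective (@gp m)}.
Proof.
case=> [[a k] s] [[a' k'] s']; rewrite !inE /= => /andP [/andP [h1 h2] h3] /andP [/andP [h1' h2'] h3'] E.
have ev : forall x, nat_of_ord (gp (a, k, s) x) = nat_of_ord (gp (a', k', s') x) by move=> x; rewrite E.
have e0 := ev ord0; have em := ev ord_max.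
rewrite /gp /= !gfunE //= in e0 em.
have ea : a = a' :> nat by lia.
have ek : k = k' :> nat by lia.
have es : s = s' :> nat.
  case: (eqVneq (nat_of_ord k) 0) => hk.
    move: h3 h3'; rewrite hk -ek hk /=; move=> /eqP -> /eqP ->; done.
  have hs : s.+1 < m.+1 by lia.
  have hs' : s'.+1 < m.+1 by lia.
  have e1 := ev (inord s.+1); have e2 := ev (inord s'.+1).
  rewrite /gp /= !gfunE // !inordK // in e1 e2.
  lia.
by rewrite (ord_inj ea) (ord_inj ek) (ord_inj es).
Qed.


Lemma sum_le N k m : \sum_(i < N) ((i + k <= m) : nat) = minn N (m.+1 - k).
Proof.
elim: N => [|N IH]; first by rewrite big_ord0 min0n.
rewrite big_ord_recr /= IH; case: leqP => h; lia.
Qed.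

Lemma sum_eq0 N : \sum_(i < N.+1) ((i == 0 :> nat) : nat) = 1.
Proof. by rewrite big_ord_recl /= big1. Qed.

Lemma sum_sq m : 6 * \sum_(i < m) ((m - i) * (m - i)) = m * m.+1 * (2 * m).+1.
Proof.
elim: m => [|m IH]; first by rewrite big_ord0.
rewrite big_ord_recl /= subn0.
rewrite (eq_bigr (fun i : 'I_m => (m - i) * (m - i))); last first.
  by move=> i _; rewrite /bump /= add1n subSS.
rewrite mulnDr IH; nia.
Qed.

Lemma card_P m : #|Pset m| = m.+1 + \sum_(i < m) (m - i) * (m - i).
Proof.
have -> : #|Pset m| = \sum_(a < m.+1) \sum_(k < m.+1) \sum_(s < m.+1)
   (((a + k <= m) : nat) * (((s + k <= m) && ((k == 0 :> nat) ==> (s == 0 :> nat))) : nat)).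
  rewrite pair_bigA pair_bigA -sum1_card big_mkcond /=; apply: eq_bigr => p _.
  by rewrite inE mulnb andbA; case: ifP.
rewrite exchange_big /=.
rewrite (eq_bigr (fun k : 'I_m.+1 => minn m.+1 (m.+1 - k) * (if (k == 0 :> nat) then 1 else minn m.+1 (m.+1 - k)))); last first.
  move=> k _; under eq_bigr do rewrite -big_distrr /=.
  rewrite -big_distrl /= sum_le; congr (_ * _).
  case: eqP => [->|hk].
    by rewrite -(sum_eq0 m); apply: eq_bigr => s _; rewrite addn0 (ltnSE (ltn_ord s)).
  rewrite -sum_le; apply: eq_bigr => s _; by case: eqP; rewrite ?andbT.
rewrite big_ord_recl /= subn0 minnn muln1; congr (_ + _).
apply: eq_bigr => i _; rewrite /bump /= add1n subSS.
have -> : minn m.+1 (m - i) = m - i by lia.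
done.
Qed.

Theorem theorem2 (n : nat) (hn : 1 <= n) :
  6 * #|Reg_OCT n| = n * (n - 1) * (2 * n - 1) + 6 * n.
Proof.
case: n hn => [//|m] _.
rewrite Reg_eq card_in_imset; last exact: gp_inj.
rewrite card_P mulnDr sum_sq; nia.
Qed.
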